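(* Let $\hat\alpha\in\{-2,-3,\dots\}$ and let $\mathcal F=(F_1,F_2)$ be a pair of finite sets of positive integers satisfying $\{0,1,\dots,-\hat\alpha-1\}\subset F_1\cup(-\hat\alpha-1-F_2)$, and assume that $\hat c=\hat\alpha+1$ and $\mathcal F$ are admissible (i.e. $\prod_{h\in\mathcal H}(x-h)\ge0$ for all $x\in\mathbb N\setminus F_1$). Then $\hat\alpha+s_{\mathcal F}\ne-1$, and: (1) if $\hat\alpha+s_{\mathcal F}\le-2$, then $\hat c'=\hat\alpha+1+s_{\mathcal F}$ and $\mathcal F_\Downarrow=(F'_1,F'_2)$ satisfy $\{0,1,\dots,-\hat c'\}\subset F'_1\cup(-\hat c'-F'_2)$ and are admissible in the same sense; (2) if $\hat\alpha+s_{\mathcal F}\ge0$, then $d=\hat\alpha+1+s_{\mathcal F}$ and $\mathcal F_\Downarrow=(F'_1,F'_2)$ are admissible in the sense that $\prod_{f\in F'_1}(x-f)\prod_{f\in F'_2}(x+d+f)\Gamma(x+d)\ge0$ for all $x\in\mathbb N$.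
   Context: $\mathbb N=\{0,1,\dots\}$; $t-F=\{t-f:f\in F\}$. For $\hat c\in\{0,-1,\dots\}$ and pair $(F_1,F_2)$: $\mathcal H=[(F_1\cup(-\hat c-F_2))\setminus\{0,\dots,-\hat c\}]\cup[F_1\cap(-\hat c-F_2)]$. For a finite set $F=\{f_1<\dots<f_{n_F}\}$ of positive integers: $s_F=1$ if $F=\emptyset$; $s_F=n_F+1$ if $F=\{1,\dots,n_F\}$; otherwise $s_F=\min\{s\ge1:s<f_s\}$. $F_\Downarrow=\emptyset$ if $F=\emptyset$ or $F=\{1,\dots,n_F\}$; otherwise $F_\Downarrow=\{f_{s_F}-s_F,\dots,f_{n_F}-s_F\}$. For a pair, $s_{\mathcal F}=s_{F_1}$ and $\mathcal F_\Downarrow=((F_1)_\Downarrow,F_2)$. *)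

(* Defs.v *)
From mathcomp Require Import all_boot all_order all_algebra.
Set Implicit Arguments. Unset Strict Implicit. Unset Printing Implicit Defensive.
Import Order.TTheory GRing.Theory Num.Theory.
Local Open Scope ring_scope.

(* Finite sets of positive integers are represented by duplicate-free
   sequences of nats (order irrelevant); [sort leq F] is the increasing
   enumeration f_1 < ... < f_n. *)

Definition shiftneg (t : int) (F : seq nat) : seq int := [seq t - f%:Z | f <- F].

(* the set H attached to c and (F1,F2):
   [(F1 ∪ (-c-F2)) \ {0,..,-c}] ∪ [F1 ∩ (-c-F2)]  (a set: duplicates removed) *)
Definition Hset (c : int) (F1 F2 : seq nat) : seq int :=
  let A := [seq f%:Z | f <- F1] in
  let B := shiftneg (- c) F2 in
  undup [seq h <- A ++ B |
          ((h \in A) || (h \in B)) && ~~ ((0 <= h) && (h <= - c))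
          || ((h \in A) && (h \in B))].

Definition covers (c : int) (F1 F2 : seq nat) : Prop :=
  forall k : int, 0 <= k <= - c ->
    (k \in [seq f%:Z | f <- F1]) || (k \in shiftneg (- c) F2).

Definition admissible (c : int) (F1 F2 : seq nat) : Prop :=
  forall x : nat, x \notin F1 -> 0 <= \prod_(h <- Hset c F1 F2) (x%:Z - h).

Definition sF (F : seq nat) : nat :=
  let srt := sort leq F in
  let n := size srt in
  if srt == iota 1 n then n.+1
  else (find (fun i => i.+1 < nth 0 srt i)%N (iota 0 n)).+1.

Definition Fdown (F : seq nat) : seq nat :=
  let srt := sort leq F in
  let n := size srt in
  if srt == iota 1 n then [::]
  else [seq (f - sF F)%N | f <- drop (sF F).-1 srt].

(* Euler's Gamma function at a positive integer n: Γ(n) = (n-1)!.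
   Only used at positive integer arguments. *)
Definition Gamma_posint (n : nat) : int := ((n.-1)`!)%:Z.

(* Main.v *)
Require Import Defs.
From mathcomp Require Import all_boot all_order all_algebra zify.
Import Order.TTheory GRing.Theory Num.Theory.

Lemma sF_facts (F : seq nat) : uniq F -> all (fun f => 0 < f)%N F ->
 [/\ (0 < sF F)%N, sF F \notin F, (forall k, (0 < k < sF F)%N -> k \in F),
     (forall f, (f \in Fdown F) = (f + sF F \in F)) & uniq (Fdown F)].
Proof.
move=> uF pF.
rewrite /Fdown /sF.
set srt := sort leq F.
have msrt : srt =i F by exact: mem_sort.
have uS : uniq srt by rewrite sort_uniq.
have sS : sorted ltn srt by rewrite ltn_sorted_uniq_leq uS sort_sorted //; exact: leq_total.
have p0 : 0%N \notin srt by rewrite msrt; apply/negP => /(allP pF).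
set n := size srt.
have Hmono : forall i k, (i < k < n)%N -> (nth 0 srt i < nth 0 srt k)%N.
  move=> i k /andP[ik kn]; apply: (sorted_ltn_nth ltn_trans) => //; rewrite inE //.
  exact: ltn_trans ik kn.
have Hge : forall i, (i < n)%N -> (i < nth 0 srt i)%N.
  elim=> [|i IH] iS.
    rewrite lt0n; apply/negP => /eqP E; move: p0; rewrite -E mem_nth //.
  have := IH (ltnW iS); have := Hmono i i.+1; rewrite leqnn iS => /(_ isT); lia.
case E: (srt == iota 1 n).
  move/eqP: E => E.
  have mF : forall x, (x \in F) = (x \in iota 1 n) by move=> x; rewrite -msrt E.
  split => //.
  - by rewrite mF mem_iota; lia.
  - by move=> k Hk; rewrite mF mem_iota; lia.
  - by move=> f; rewrite in_nil mF mem_iota; lia.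
set j := find _ _.
have jn : (j < n)%N.
  rewrite -[n](size_iota 0) -has_find; apply/negPn/negP => /hasPn H.
  move/negbT: E => /negP; apply; apply/eqP/(@eq_from_nth _ 0); first by rewrite size_iota.
  move=> i iS; rewrite nth_iota //.
  have := H i; rewrite mem_iota add0n => /(_ iS); have := Hge i iS. rewrite /= add1n. lia.
have Hlt : forall i, (i < j)%N -> nth 0 srt i = i.+1.
  move=> i ij; have iS : (i < n)%N by exact: ltn_trans ij jn.
  have := before_find 0 ij; rewrite nth_iota ?size_iota // add0n /= => H.
  have := Hge i iS; lia.
have Hj : (j.+1 < nth 0 srt j)%N.
  have := @nth_find _ 0 (fun i => i.+1 < nth 0 srt i)%N (iota 0 n).
  rewrite has_find size_iota -/j => /(_ jn); rewrite nth_iota // add0n //.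
have Hdrop : forall g, g \in drop j srt -> (j.+1 < g)%N.
  move=> g /(nthP 0) [i]; rewrite size_drop nth_drop => iS <-.
  case: i iS => [|i] iS; first by rewrite addn0.
  apply: (ltn_trans Hj); apply: Hmono; move: iS; rewrite -/n; lia.
rewrite /=.
split => //.
- rewrite -msrt; apply/negP => Hin.
  have iS : (index j.+1 srt < n)%N by rewrite index_mem.
  have Ei := nth_index 0 Hin.
  case: (ltngtP (index j.+1 srt) j) => H.
  + by have := Hlt _ H; rewrite Ei; lia.
  + by have := Hmono j (index j.+1 srt); rewrite Ei H iS /= => /(_ isT); lia.
  + by move: Hj; rewrite -H Ei; lia.
- move=> k Hk; rewrite -msrt; case: k Hk => [|k] Hk; first lia.
  have kj : (k < j)%N by lia. by rewrite -(Hlt k kj) mem_nth //; exact: ltn_trans kj jn.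
- move=> f; apply/mapP/idP.
  + by move=> [g gin ->]; rewrite -msrt subnK ?(mem_drop gin) //; have := Hdrop g gin; lia.
  + rewrite -msrt => Hin; exists (f + j.+1)%N; last by rewrite addnK.
    have iS : (index (f + j.+1) srt < n)%N by rewrite index_mem.
    have Ei := nth_index 0 Hin.
    case: (ltnP (index (f + j.+1) srt) j) => H.
      by have := Hlt _ H; rewrite Ei; lia.
    rewrite -Ei -(subnKC H) -nth_drop mem_nth // size_drop -/n; lia.
- rewrite map_inj_in_uniq ?drop_uniq //.
  move=> a b ain bin; have := Hdrop a ain; have := Hdrop b bin; lia.
Qed.


Local Open Scope ring_scope.


Definition inZ (F : seq nat) (h : int) : bool := (0 <= h) && (absz h \in F).

Lemma memZ F h : (h \in [seq f%:Z | f <- F]) = inZ F h.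
Proof.
apply/mapP/andP => [[f fF ->]|[h0 hF]]; first by split.
by exists (absz h) => //; lia.
Qed.

Lemma memS t F h : (h \in shiftneg t F) = inZ F (t - h).
Proof.
apply/mapP/andP => [[f fF ->]|[h0 hF]].
  by rewrite opprB addrC subrK; split.
by exists (absz (t - h)) => //; lia.
Qed.

Lemma memH c F1 F2 h : (h \in Hset c F1 F2) =
  ((inZ F1 h || inZ F2 (-c - h)) && ~~((0 <= h) && (h <= -c))) || (inZ F1 h && inZ F2 (-c-h)).
Proof.
rewrite /Hset mem_undup mem_filter mem_cat memZ memS.
by case: (inZ F1 h); case: (inZ F2 _); rewrite /= ?andbT ?andbF ?orbF //.
Qed.

Lemma inZ_nat F (n : nat) : inZ F n%:Z = (n \in F).
Proof. by []. Qed.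

Lemma inZ0 F : all (fun f => 0 < f)%N F -> inZ F 0 = false.
Proof. by move=> pF; rewrite inZ_nat; apply/negP => /(allP pF). Qed.

Lemma mem_mapB (t a : int) L : (a \in [seq h - t | h <- L]) = (a + t \in L).
Proof.
apply/mapP/idP => [[h hL ->]|H]; first by rewrite subrK.
by exists (a + t); rewrite ?addrK.
Qed.

Lemma mem_mapD (t a : int) (L : seq nat) : (a \in [seq f%:Z + t | f <- L]) = inZ L (a - t).
Proof.
apply/mapP/andP => [[f fL ->]|[h0 hL]]; first by rewrite addrK.
by exists (absz (a-t)) => //; lia.
Qed.

Ltac dec := repeat match goal with
 | |- context [ (?a <= ?b)%R ] => first [ have ->: ((a <= b)%R = true) by apply/idP; lia
                                         | have ->: ((a <= b)%R = false) by apply/negbTE/negP; lia  ]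
 | |- context [ (?a < ?b)%R ] => first [ have ->: ((a < b)%R = true) by apply/idP; lia
                                         | have ->: ((a < b)%R = false) by apply/negbTE/negP; lia  ]
 | |- context [ (?a == ?b :> int) ] => first [ have ->: ((a == b) = true) by apply/idP; lia
                                         | have ->: ((a == b) = false) by apply/negbTE/negP; lia  ]
 end.

Theorem mainTheorem13 (alpha : int) (F1 F2 : seq nat) :
  alpha <= -2 ->
  uniq F1 -> uniq F2 ->
  all (fun f => 0 < f)%N F1 -> all (fun f => 0 < f)%N F2 ->
  (forall k : int, 0 <= k <= - alpha - 1 ->
     (k \in [seq f%:Z | f <- F1]) || (k \in shiftneg (- alpha - 1) F2)) ->
  admissible (alpha + 1) F1 F2 ->
  alpha + (sF F1)%:Z != -1 /\
  (alpha + (sF F1)%:Z <= -2 ->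
     covers (alpha + 1 + (sF F1)%:Z) (Fdown F1) F2 /\
     admissible (alpha + 1 + (sF F1)%:Z) (Fdown F1) F2) /\
  (0 <= alpha + (sF F1)%:Z ->
     forall x : nat,
       0 <= (\prod_(f <- Fdown F1) (x%:Z - f%:Z))
            * (\prod_(f <- F2) (x%:Z + (alpha + 1 + (sF F1)%:Z) + f%:Z))
            * Gamma_posint (absz (x%:Z + (alpha + 1 + (sF F1)%:Z)))).
Proof.
move=> ha uF1 uF2 pF1 pF2 Hc Had.
have [s0 sn K1 K3 uD] := @sF_facts F1 uF1 pF1.
set s := sF F1 in s0 sn K1 K3 uD *.
have Hc' : forall k, 0 <= k <= -alpha - 1 -> inZ F1 k || inZ F2 (-alpha - 1 - k).
  by move=> k hk; rewrite -memZ -memS; exact: Hc.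
have hs : inZ F1 s%:Z = false by rewrite inZ_nat (negbTE sn).
have La : forall x, inZ (Fdown F1) (x - s%:Z) = (s%:Z < x) && inZ F1 x.
  move=> x; rewrite /inZ K3.
  case: (ltgtP x s%:Z) => hx.
  - by dec.
  - by dec; rewrite (_ : (absz (x - s%:Z) + s)%N = absz x) //; lia.
  - by rewrite hx subrr /= add0n (negbTE sn).
have Lb : forall x, x < s%:Z -> inZ F1 x = (0 < x).
  move=> x hx; rewrite /inZ.
  case: (ltgtP x 0) => h0.
  - by dec.
  - by dec; rewrite K1 //; lia.
  - by rewrite h0 /=; apply/negbTE/negP => /(allP pF1).
split.
  apply/eqP => E.
  have := Hc' s%:Z; rewrite hs /=.
  rewrite (_ : -alpha - 1 - s%:Z = 0); last lia. rewrite inZ0 // => H; have := H ltac:(lia); done.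
split.
  move=> h2; split.
    move=> k hk; rewrite memZ memS -[k in inZ (Fdown F1) k](addrK s%:Z) La.
    rewrite (_ : - (alpha + 1 + s%:Z) - k = -alpha - 1 - (k + s%:Z)); last lia.
    have := Hc' (k + s%:Z) ltac:(lia).
    have [hk0|hk0] : k = 0 \/ 0 < k by move: hk; lia.
    by rewrite hk0 add0r hs andbF.
    by dec.
  move=> y yn.
  have P : perm_eq (Hset (alpha + 1 + s%:Z) (Fdown F1) F2)
                   [seq h - s%:Z | h <- 0 :: Hset (alpha + 1) F1 F2].
    apply: uniq_perm; first exact: undup_uniq.
      rewrite map_inj_uniq /=; last exact: addIr.
      rewrite undup_uniq andbT memH inZ0 //; dec; by case: (inZ _ _).
    move=> h; rewrite mem_mapB.
    set x := h + s%:Z.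
    rewrite (_ : h = x - s%:Z); last by rewrite /x addrK.
    rewrite in_cons !memH La.
    rewrite (_ : -(alpha+1+s%:Z) - (x - s%:Z) = -(alpha+1) - x); last lia.
    have hB0 : x = 0 -> inZ F2 (-(alpha+1) - x).
      move=> ->; have := Hc' 0 ltac:(lia); rewrite inZ0 //=.
      by rewrite (_ : -alpha - 1 - 0 = -(alpha+1) - 0) //; lia.
    have hBm : -(alpha+1) < x -> inZ F2 (-(alpha+1) - x) = false.
      by move=> hx; rewrite /inZ; dec.
    have [hx|[hx|[hx|[hx|hx]]]] : x < 0 \/ x = 0 \/ (0 < x < s%:Z) \/
        (s%:Z <= x <= -(alpha+1)) \/ (-(alpha+1) < x) by lia.
    - rewrite Lb; last lia. have ar := conj hx (conj ha (conj h2 s0)); clear -ar. dec. by case: (inZ F1 x); case: (inZ F2 (-(alpha+1) - x)).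
    - rewrite (hB0 hx) hx inZ0 //; have ar := conj hx (conj ha (conj h2 s0)); clear -ar. by dec.
    - rewrite Lb; last lia. have ar := conj hx (conj ha (conj h2 s0)); clear -ar. dec. by case: (inZ F1 x); case: (inZ F2 (-(alpha+1) - x)).
    - have [hxs|hxs] : x = s%:Z \/ s%:Z < x by lia.
        have ar := conj hx (conj ha (conj h2 s0)); rewrite hxs hs; clear -ar hxs. dec. by case: (inZ F2 _).
      have ar := conj hxs (conj hx (conj ha (conj h2 s0))); clear -ar. dec. by case: (inZ F1 x); case: (inZ F2 (-(alpha+1) - x)).
    - rewrite (hBm hx); have ar := conj hx (conj ha (conj h2 s0)); clear -ar. dec. by case: (inZ F1 x).
  rewrite (perm_big _ P) big_map big_cons.
  rewrite (eq_bigr (fun h => (y + s)%N%:Z - h)); last by move=> h _; lia.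
  apply: mulr_ge0; first lia.
  by apply: Had; rewrite -K3.
move=> h2 y.
apply: mulr_ge0; last by rewrite /Gamma_posint.
apply: mulr_ge0; last first.
  apply: prodr_ge0 => f _; clear -h2 s0; lia.
case: (boolP (y \in Fdown F1)) => yin.
  by rewrite (big_rem y yin) /= subrr mul0r.
have := Had (y + s)%N ltac:(by rewrite -K3).
rewrite (bigID (fun h => s%:Z <= h)) /=.
rewrite pmulr_lge0; last first.
  apply: prodr_gt0 => h; rewrite -ltNge => hh; clear -hh; lia.
set H := Hset (alpha + 1) F1 F2.
have P2 : perm_eq [seq h <- H | s%:Z <= h] [seq f%:Z + s%:Z | f <- Fdown F1].
  apply: uniq_perm; first by rewrite filter_uniq // undup_uniq.
    by rewrite map_inj_uniq // => u v /= /addIr [].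
  move=> h; rewrite mem_filter mem_mapD La /H memH.
  have [hh|[hh|hh]] : h < s%:Z \/ h = s%:Z \/ s%:Z < h by lia.
  - have ar := conj hh h2; clear -ar; dec; by [].
  - rewrite hh hs.
    have -> : inZ F2 (- (alpha + 1) - s%:Z) = false by rewrite /inZ; clear -h2; dec.
    by clear -h2; dec.
  - have -> : inZ F2 (- (alpha + 1) - h) = false by rewrite /inZ; clear -hh h2; dec.
    have ar := conj hh h2; clear -ar; dec. by case: (inZ F1 h).
have E : \prod_(h <- H | s%:Z <= h) ((y + s)%N%:Z - h) = \prod_(f <- Fdown F1) (y%:Z - f%:Z).
  rewrite -big_filter (perm_big _ P2) big_map.
  by apply: eq_bigr => f _; lia.
by rewrite E.
Qed.
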